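(* Let $U$ be a regular molecule and $k\ge-1$. If $U$ admits a $k$-layering, then $\mathcal M_kU$ is acyclic, hence $U$ admits a $k$-ordering.
   Context: All posets are finite; $y$ covers $x$ if $x<y$ with nothing strictly between. A finite poset is graded if for each $x$ all maximal covering chains descending from $x$ have the same length $\dim x$; $U_n$ denotes elements of dimension $n$. An oriented graded poset is a finite graded poset with a label $\pm$ on each covering pair; $\Delta^\alpha x$ ($\nabla^\alpha x$) is the set of elements covered by (covering) $x$ with label $\alpha$. For closed (downward closed) $U$, with $\mathrm{cl}$ downward closure, $\max U$ maximal elements, $\dim U$ maximal dimension: $\Delta^\alpha_nU=\{x\in U_n:\nabla^{-\alpha}x\cap U=\emptyset\}$, $\partial^\alpha_nU=\mathrm{cl}(\Delta^\alpha_nU)\cup\bigcup_{j<n}\mathrm{cl}((\max U)_j)$ ($\emptyset$ for $n<0$), $\partial_nU=\partial^-_nU\cup\partial^+_nU$, subscript omitted for $n=\dim U-1$; $\Delta^\alpha_kx:=\Delta^\alpha_k\mathrm{cl}\{x\}$. Maps are functions with $f(\partial^\alpha_n\mathrm{cl}\{x\})=\partial^\alpha_n\mathrm{cl}\{f(x)\}$; inclusions are injective maps. $U\#_kV$ is the pushout of $U\hookleftarrow\partial^+_kU\cong\partial^-_kV\hookrightarrow V$; for $U,V$ of equal dimension $n$ with $\partial U\cong\partial V$ compatibly with $\partial^\pm$, $U\Rightarrow V$ is that pushout with a new element $\top$ of dimension $n+1$, $\Delta^-\top=U_n$, $\Delta^+\top=V_n$. $U$ is round if $\partial^-_nU\cap\partial^+_nU=\partial_{n-1}U$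 for all $n<\dim U$. Regular molecules: smallest isomorphism-closed class containing the point, closed under $U\#_kV$ ($k<\min(\dim U,\dim V)$) and $U\Rightarrow V$ for round regular molecules of equal dimension; pasting is associative up to unique isomorphism. $\mathcal M_kU$: directed graph with vertices $\bigcup_{i>k}(\max U)_i$ and edge $x\to y$ iff $\Delta^+_kx\cap\Delta^-_ky\ne\emptyset$; a $k$-ordering is a topological sort of $\mathcal M_kU$ (when acyclic). For $-1\le k<\dim U$ and $m=|\bigcup_{i>k}(\max U)_i|$, a $k$-layering of $U$ is a sequence $(U^{(i)})_{i=1}^m$ of regular molecules with $\dim U^{(i)}>k$ and $U\cong U^{(1)}\#_k\cdots\#_kU^{(m)}$. *)

(* Defs.v *)
From mathcomp Require Import all_boot all_order all_algebra.
Set Implicit Arguments. Unset Strict Implicit. Unset Printing Implicit Defensive.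
Import Order.TTheory GRing.Theory Num.Theory.

(* An oriented graded poset, presented by its labelled covering relation:
   [ogcov x y] means "y covers x", and [ogsgn x y] is the label of that
   covering pair (true = +, false = -); [ogsgn] is only relevant on
   covering pairs. *)
Record ogp := OGP {
  ogT :> finType;
  ogcov : rel ogT;
  ogsgn : ogT -> ogT -> bool }.

Section OGPDefs.
Variable P : ogp.

Definition le (x y : P) : bool := connect (@ogcov P) x y.

(* length of the longest descending covering chain from x (fuel #|P|);
   in a graded poset this is dim x *)
Fixpoint height (f : nat) (x : P) : nat :=
  if f is f'.+1 then \max_(y : P | ogcov y x) (height f' y).+1 else 0.
Definition dimx (x : P) : nat := height #|P| x.

Definition cl (A : {set P}) : {set P} := [set x | [exists y in A, le x y]].
Definition maxs (A : {set P}) : {set P} :=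
  [set x in A | [forall y in A, le x y ==> (y == x)]].
Definition dimS (A : {set P}) : nat := \max_(x in A) dimx x.
Definition dimP : nat := dimS [set: P].

Definition Delta (a : bool) (n : int) (A : {set P}) : {set P} :=
  match n with
  | Posz m => [set x in A | (dimx x == m) &&
                 [forall y in A, ~~ (ogcov x y && (ogsgn x y == ~~ a))]]
  | Negz _ => set0
  end.

Definition bd (a : bool) (n : int) (A : {set P}) : {set P} :=
  match n with
  | Posz m => cl (Delta a m A) :|: cl [set x in maxs A | dimx x < m]
  | Negz _ => set0
  end.
Definition bd2 (n : int) (A : {set P}) : {set P} := bd false n A :|: bd true n A.

Definition round : Prop :=
  forall n : nat, n < dimP ->
    bd false n%:Z [set: P] :&: bd true n%:Z [set: P] = bd2 (n%:Z - 1)%R [set: P].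
End OGPDefs.

Definition embedding (P Q : ogp) (f : P -> Q) : Prop :=
  injective f /\
  forall x y, ogcov (f x) (f y) = ogcov x y /\
              (ogcov x y -> ogsgn (f x) (f y) = ogsgn x y).

Definition iso (P Q : ogp) : Prop :=
  exists f : P -> Q, bijective f /\
  forall x y, ogcov (f x) (f y) = ogcov x y /\
              (ogcov x y -> ogsgn (f x) (f y) = ogsgn x y).

(* W is (isomorphic to) the pasting U #_k V: the pushout of
   U <-< bd^+_k U ~= bd^-_k V >-> V, described by its two inclusions. *)
Definition is_paste (k : int) (U V W : ogp) : Prop :=
  exists (i : U -> W) (j : V -> W),
    embedding i /\ embedding j /\
    (forall z, (exists x, z = i x) \/ (exists y, z = j y)) /\
    (forall x y, i x = j y -> x \in bd true k [set: U] /\ y \in bd false k [set: V]) /\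
    (forall x, x \in bd true k [set: U] -> exists y, i x = j y) /\
    (forall y, y \in bd false k [set: V] -> exists x, i x = j y) /\
    (forall z w, ogcov z w ->
       (exists x x', [/\ z = i x, w = i x' & ogcov x x']) \/
       (exists y y', [/\ z = j y, w = j y' & ogcov y y'])).

(* W is (isomorphic to) U => V, for U, V of dimension n with bd U ~= bd V
   compatibly with bd^-, bd^+ *)
Definition is_cell (U V W : ogp) : Prop :=
  let n := dimP U in
  exists (top : W) (i : U -> W) (j : V -> W),
    embedding i /\ embedding j /\
    (forall x, i x <> top) /\ (forall y, j y <> top) /\
    (forall z, z <> top -> (exists x, z = i x) \/ (exists y, z = j y)) /\
    (forall x y, i x = j y ->
       [/\ x \in bd2 (n%:Z - 1)%R [set: U], y \in bd2 (n%:Z - 1)%R [set: V] &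
           forall a, (x \in bd a (n%:Z - 1)%R [set: U]) = (y \in bd a (n%:Z - 1)%R [set: V])]) /\
    (forall x, x \in bd2 (n%:Z - 1)%R [set: U] -> exists y, i x = j y) /\
    (forall y, y \in bd2 (n%:Z - 1)%R [set: V] -> exists x, i x = j y) /\
    (forall x, dimx x = n -> ogcov (i x) top /\ ogsgn (i x) top = false) /\
    (forall y, dimx y = n -> ogcov (j y) top /\ ogsgn (j y) top = true) /\
    (forall z w, ogcov z w ->
       (w = top /\ ((exists x, z = i x /\ dimx x = n) \/ (exists y, z = j y /\ dimx y = n))) \/
       (exists x x', [/\ z = i x, w = i x' & ogcov x x']) \/
       (exists y y', [/\ z = j y, w = j y' & ogcov y y'])).

(* regular molecules (closed under isomorphism by construction) *)
Inductive regular : ogp -> Prop :=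
| reg_point (P : ogp) : #|P| = 1 -> (forall x y : P, ~~ ogcov x y) -> regular P
| reg_paste (k : nat) (U V W : ogp) : regular U -> regular V ->
    k < dimP U -> k < dimP V -> is_paste k%:Z U V W -> regular W
| reg_cell (U V W : ogp) : regular U -> regular V -> round U -> round V ->
    dimP U = dimP V -> is_cell U V W -> regular W.

Fixpoint paste_seq (k : int) (s : seq ogp) (W : ogp) : Prop :=
  match s with
  | [::] => False
  | A :: s' => if s' is [::] then iso A W
               else exists W' : ogp, paste_seq k s' W' /\ is_paste k A W' W
  end.

Definition Mvert (U : ogp) (k : int) : {set U} :=
  [set x in maxs [set: U] | (k < (dimx x)%:Z)%R].

Definition layering (U : ogp) (k : int) (s : seq ogp) : Prop :=
  [/\ (-1 <= k)%R, (k < (dimP U)%:Z)%R,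
      size s = #|Mvert U k|,
      foldr (fun A Q => (regular A /\ (k < (dimP A)%:Z)%R) /\ Q) True s &
      paste_seq k s U].

Definition Medge (U : ogp) (k : int) (x y : U) : bool :=
  [&& x \in Mvert U k, y \in Mvert U k &
      Delta true k (cl [set x]) :&: Delta false k (cl [set y]) != set0].

Definition M_acyclic (U : ogp) (k : int) : Prop :=
  forall x y : U, Medge k x y -> ~~ connect (Medge k) y x.

Definition k_ordering (U : ogp) (k : int) (s : seq U) : Prop :=
  [/\ uniq s, (forall x, (x \in s) = (x \in Mvert U k)) &
      forall x y, Medge k x y -> index x s < index y s].

(* Main.v *)
Require Import Defs.
From mathcomp Require Import all_boot all_order all_algebra.
Set Implicit Arguments. Unset Strict Implicit. Unset Printing Implicit Defensive.

Lemma connect_rect (T : finType) (r : rel T) (Q : T -> T -> Prop) :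
  (forall x, Q x x) -> (forall x y z, r x y -> Q y z -> Q x z) ->
  forall x y, connect r x y -> Q x y.
Proof.
move=> H0 HS x y /connectP [p]; elim: p x => [|w p IH] x /=.
  by move=> _ ->.
by move=> /andP[rxw pw] ey; apply: HS rxw (IH _ pw ey).
Qed.

Definition acyc (P : ogp) := forall a b : P, ogcov a b -> ~~ le b a.
Definition dcl (P Q : ogp) (e : P -> Q) := forall z a, ogcov z (e a) -> exists b, z = e b.

Section Basic.
Variable P : ogp.
Implicit Types x y z w : P.

Lemma le_refl x : le x x. Proof. exact: connect0. Qed.
Lemma le_cov x y : ogcov x y -> le x y. Proof. exact: connect1. Qed.
Lemma le_tr x y z : le x y -> le y z -> le x z. Proof. exact: connect_trans. Qed.

Lemma in_cl (A : {set P}) z : (z \in cl A) = [exists y in A, le z y].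
Proof. by rewrite /cl inE. Qed.

Lemma cl_dc (A : {set P}) z w : le z w -> w \in cl A -> z \in cl A.
Proof.
move=> lzw; rewrite !in_cl => /existsP [y /andP [yA lwy]].
by apply/existsP; exists y; rewrite yA (le_tr lzw lwy).
Qed.

Lemma bd_dc a k (A : {set P}) z w : le z w -> w \in bd a k A -> z \in bd a k A.
Proof.
case: k => [m|m] lzw; rewrite /bd; last by rewrite inE.
rewrite !in_setU => /orP [] h.
  by rewrite (cl_dc lzw h).
by rewrite (cl_dc lzw h) orbT.
Qed.

Lemma bd2_dc k (A : {set P}) z w : le z w -> w \in bd2 k A -> z \in bd2 k A.
Proof.
move=> lzw; rewrite !in_setU => /orP [] h.
  by rewrite (bd_dc lzw h).
by rewrite (bd_dc lzw h) orbT.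
Qed.

Lemma first_step x y : le x y -> x != y -> exists2 w, ogcov x w & le w y.
Proof.
move=> /connectP [[|w p]] /=; first by move=> _ ->; rewrite eqxx.
move=> /andP [c pa] -> _; exists w => //; apply/connectP; exists p => //.
Qed.

Lemma conn_mono (T : finType) (r : rel T) (f : T -> nat) :
  (forall a b, r a b -> f a <= f b) -> forall (u v : T), connect r u v -> f u <= f v.
Proof.
move=> H; apply: connect_rect => [x|x y z rxy fyz] //.
exact: leq_trans (H _ _ rxy) fyz.
Qed.

Lemma heightS f x : height f.+1 x = \max_(y | ogcov y x) (height f y).+1.
Proof. by []. Qed.

Hypothesis acP : acyc P.

Definition sd x : {set P} := [set z | [exists y, ogcov y x && le z y]].

Lemma sd_notin x : x \notin sd x.
Proof.
rewrite inE; apply/negP => /existsP [y /andP [c l]].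
by move: (acP c); rewrite l.
Qed.

Lemma height_sd f x : height f x <= #|sd x|.
Proof.
elim: f x => [|f IH] x; first by [].
rewrite heightS; apply/bigmax_leqP => y cyx.
apply: leq_ltn_trans (IH y) _.
apply: proper_card; apply/properP; split.
  apply/subsetP => z; rewrite !inE => /existsP [y' /andP [c l]].
  by apply/existsP; exists y; rewrite cyx (le_tr l (le_cov c)).
exists y; last exact: sd_notin.
by rewrite inE; apply/existsP; exists y; rewrite cyx le_refl.
Qed.

Lemma sd_small x : #|sd x| < #|P|.
Proof.
rewrite -cardsT; apply: proper_card; apply/properP; split.
  exact: subsetT.
by exists x; [exact: in_setT | exact: sd_notin].
Qed.

Lemma height_stable f x : height f x < f -> height f.+1 x = height f x.
Proof.
elim: f x => [|f IH] x H; first by [].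
rewrite heightS [in RHS]heightS; rewrite heightS in H.
apply: eq_bigr => y cyx; congr S; apply: IH.
move: H => /bigmax_leqP H; exact: H.
Qed.

Lemma dim_height d x : height (#|P| + d) x = dimx x.
Proof.
elim: d => [|d IH]; first by rewrite addn0.
rewrite addnS height_stable //.
apply: leq_ltn_trans (height_sd _ _) _; apply: leq_trans (sd_small x) _.
exact: leq_addr.
Qed.

Lemma dim_cov y x : ogcov y x -> dimx y < dimx x.
Proof.
move=> c; rewrite -(dim_height 1 x) addn1 heightS.
rewrite -(dim_height 0 y) addn0.
exact: (@leq_bigmax_cond _ (fun z => ogcov z x) (fun z => (height #|P| z).+1) y).
Qed.

Lemma dim_le y x : le y x -> dimx y <= dimx x.
Proof. apply: conn_mono => a b c; exact: ltnW (dim_cov c). Qed.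

Lemma dim_lt y x : le y x -> y != x -> dimx y < dimx x.
Proof.
move=> l ne; have [w c l2] := first_step l ne.
exact: leq_trans (dim_cov c) (dim_le l2).
Qed.
End Basic.
Section Emb.
Variables P Q : ogp.
Variable e : P -> Q.
Hypothesis he : embedding e.

Lemma emb_inj : injective e. Proof. by case: he. Qed.
Lemma emb_cov x y : ogcov (e x) (e y) = ogcov x y. Proof. by case: he => _ h; case: (h x y). Qed.
Lemma emb_sgn x y : ogcov x y -> ogsgn (e x) (e y) = ogsgn x y.
Proof. by case: he => _ h; case: (h x y). Qed.

Lemma emb_le x y : le x y -> le (e x) (e y).
Proof.
apply: (@connect_rect _ _ (fun x y => le (e x) (e y))) => [a|a b c r l]; first exact: le_refl.
by apply: le_tr l; apply: le_cov; rewrite emb_cov.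
Qed.

Lemma emb_acyc : acyc Q -> acyc P.
Proof.
move=> aQ a b c; apply/negP => l.
by move: (aQ _ _ (etrans (emb_cov a b) c)); rewrite emb_le.
Qed.

Hypothesis de : dcl e.

Lemma dcl_le z a : le z (e a) -> exists b, z = e b /\ le b a.
Proof.
move=> l.
suff: forall z' w, le z' w -> forall a, w = e a -> exists b, z' = e b /\ le b a.
  by move=> H; exact: (H _ _ l a erefl).
apply: (@connect_rect _ _ (fun z' w => forall a, w = e a -> exists b, z' = e b /\ le b a))
  => [x a0 -> | x y w r IH a0 ewa].
  by exists a0; split => //; exact: le_refl.
have [b' [yb l']] := IH a0 ewa; rewrite yb in r.
have [b eb] := de r; subst x.
exists b; split => //; apply: le_tr l'; apply: le_cov; by rewrite -emb_cov.
Qed.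

Lemma dcl_height f a : height f (e a) = height f a.
Proof.
elim: f a => [|f IH] a; first by [].
rewrite !heightS; apply/eqP; rewrite eqn_leq; apply/andP; split;
  apply/bigmax_leqP => y cy.
  have [b eb] := de cy; subst y; rewrite IH.
  apply: (@leq_bigmax_cond _ (fun z => ogcov z a) (fun z => (height f z).+1) b).
  by rewrite -emb_cov.
rewrite -IH.
apply: (@leq_bigmax_cond _ (fun z => ogcov z (e a)) (fun z => (height f z).+1) (e y)).
by rewrite emb_cov.
Qed.

Lemma dcl_dim : acyc Q -> forall a, dimx (e a) = dimx a.
Proof.
move=> aQ a; rewrite /dimx dcl_height.
have le_PQ : #|P| <= #|Q| by apply: leq_card; exact: emb_inj.
rewrite -(subnKC le_PQ) dim_height //; exact: emb_acyc.
Qed.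

Lemma acyc_via : acyc P -> forall x b, ogcov (e x) b -> ~~ le b (e x).
Proof.
move=> aP x b c; apply/negP => l.
have [y [eb l']] := dcl_le l; subst b.
by move: (aP _ _ (etrans (esym (emb_cov x y)) c)); rewrite l'.
Qed.
End Emb.

Lemma paste_facts (k : int) (U V W : ogp) : is_paste k U V W ->
  exists (i : U -> W) (j : V -> W),
  [/\ embedding i, embedding j, dcl i, dcl j &
      (forall z, (exists x, z = i x) \/ (exists y, z = j y))] /\
  ((forall x y, i x = j y -> x \in bd true k [set: U] /\ y \in bd false k [set: V]) /\
      (forall z w, ogcov z w ->
       (exists x x', [/\ z = i x, w = i x' & ogcov x x']) \/
       (exists y y', [/\ z = j y, w = j y' & ogcov y y']))).
Proof.
move=> [i [j [ei [ej [surj [ov [ovU [ovV cov]]]]]]]].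
exists i, j; split; split => //.
- move=> z a c; case: (cov _ _ c) => [[x [x' [-> /(emb_inj ei) <- _]]]|].
    by exists x.
  move=> [y [y' [-> e2 c2]]].
  have [_ hy'] := ov _ _ e2.
  have := ovV y (bd_dc (le_cov c2) hy'); move=> [x ex]; by exists x.
- move=> z a c; case: (cov _ _ c) => [[x [x' [-> e2 c2]]]|].
    have [hx' _] := ov _ _ (esym e2).
    have := ovU x (bd_dc (le_cov c2) hx'); move=> [y ey]; by exists y.
  by move=> [y [y' [-> /(emb_inj ej) <- _]]]; exists y.
Qed.

Lemma regular_acyc (U : ogp) : regular U -> acyc U.
Proof.
elim => {U}.
- by move=> P _ nc a b; rewrite (negbTE (nc a b)).
- move=> k U V W _ aU _ aV _ _ /paste_facts [i [j [[ei ej di dj surj] [_ cov]]]].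
  move=> a b c; case: (surj a) => [[x ex]|[y ey]]; subst a.
    exact: (acyc_via ei di aU c).
  exact: (acyc_via ej dj aV c).
- move=> U V W _ aU _ aV _ _ _ [top [i [j [ei [ej [nti [ntj [surj [ov [ovU [ovV [_ [_ cov]]]]]]]]]]]]].
  have di : dcl i.
    move=> z a c; case: (cov _ _ c) => [[et _]|[[x [x' [-> /(emb_inj ei) <- _]]]|]].
    + by case: (nti a).
    + by exists x.
    move=> [y [y' [-> e2 c2]]].
    have [_ hy' _] := ov _ _ e2.
    have := ovV y (bd2_dc (le_cov c2) hy'); move=> [x ex]; by exists x.
  have dj : dcl j.
    move=> z a c; case: (cov _ _ c) => [[et _]|[[x [x' [-> e2 c2]]]|]].
    + by case: (ntj a).
    + have [hx' _ _] := ov _ _ (esym e2).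
      have := ovU x (bd2_dc (le_cov c2) hx'); move=> [y ey]; by exists y.
    by move=> [y [y' [-> /(emb_inj ej) <- _]]]; exists y.
  move=> a b c.
  have atop : a <> top.
    move=> ea; subst a; case: (cov _ _ c) =>
      [[_ [[x [ex _]]|[y [ey _]]]]|[[x [x' [ex _ _]]]|[y [y' [ey _ _]]]]].
    + exact: nti (esym ex).
    + exact: ntj (esym ey).
    + exact: nti (esym ex).
    + exact: ntj (esym ey).
  case: (surj a atop) => [[x ex]|[y ey]]; subst a.
    exact: (acyc_via ei di aU c).
  exact: (acyc_via ej dj aV c).
Qed.

Definition decomp (W : ogp) (n m : nat) (L : nat -> {set W}) : Prop :=
 [/\ (forall t z w, ogcov z w -> w \in L t -> z \in L t),
     (forall z, exists2 t, t < m & z \in L t),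
     (forall t t' z, t < t' < m -> z \in L t -> z \in L t' ->
        dimx z <= n /\ (dimx z = n -> forall w, w \in L t -> ogcov z w -> ogsgn z w))
   & (forall t, t < m -> exists2 a, a \in L t & n < dimx a)].

Lemma dimP_witness (A : ogp) n : n < dimP A -> exists a : A, n < dimx a.
Proof.
move=> h; case: (pickP (fun a : A => n < dimx a)) => [a ha|none].
  by exists a.
move: h; rewrite ltnNge => /negP; case; apply/bigmax_leqP => a _.
by rewrite leqNgt none.
Qed.

Lemma bd_dim (A : ogp) (aA : acyc A) b n (a : A) :
  a \in bd b (Posz n) [set: A] ->
  dimx a <= n /\ (dimx a = n -> a \in Delta b n [set: A]).
Proof.
rewrite /bd in_setU !in_cl => /orP [] /existsP [d /andP [hd l]].
  have hd' := hd; move: hd'; rewrite /Delta inE => /andP [_ /andP [/eqP dd _]].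
  split; first by rewrite -dd; exact: dim_le.
  move=> da; case: (a =P d) => [-> // | /eqP ne].
  by have := dim_lt aA l ne; rewrite da dd ltnn.
move: hd; rewrite inE => /andP [_ dd].
have := leq_ltn_trans (dim_le aA l) dd => lt.
split; first exact: ltnW.
by move=> da; move: lt; rewrite da ltnn.
Qed.

Lemma decomp_ex n s : forall W, acyc W -> paste_seq (Posz n) s W ->
  foldr (fun A Q => (regular A /\ (Posz n < (dimP A)%:Z)%R) /\ Q) True s ->
  exists L : nat -> {set W}, decomp n (size s) L.
Proof.
elim: s => [|A s IH] W aW //=.
case: s IH => [|B s] IH.
  move=> [f [bij hf]] [[_ dA] _].
  rewrite ltz_nat in dA.
  have ef : embedding f by split => //; exact: bij_inj.
  have df : dcl f by move=> z a _; case: bij => g _ gK; exists (g z); rewrite gK.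
  exists (fun _ => setT); split.
  - by move=> *; rewrite inE.
  - by move=> z; exists 0; rewrite ?inE.
  - by move=> t [|t'] z /andP [l1 l2]; move: l1 l2.
  - move=> t _; have [a ha] := dimP_witness dA; exists (f a); first by rewrite inE.
    by rewrite (dcl_dim ef df aW).
move=> [W' [ps hp]] [[_ dA] fo].
rewrite ltz_nat in dA.
have [i [j [[ei ej di dj surj] [ov cov]]]] := paste_facts hp.
have aW' := emb_acyc ej aW.
have aA := emb_acyc ei aW.
have [L' [dc' cvr' ovl' ex']] := IH W' aW' ps fo.
exists (fun t => if t is t'.+1 then j @: L' t' else i @: setT); split.
- move=> [|t] z w c /imsetP [a ha ew]; subst w.
    by have [b ->] := di _ _ c; apply/imsetP; exists b; rewrite ?inE.
  have [b eb] := dj _ _ c; subst z; apply/imsetP; exists b => //.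
  rewrite (emb_cov ej) in c; exact: (dc' _ _ _ c ha).
- move=> z; case: (surj z) => [[x ->]|[y ->]].
    by exists 0 => //; apply/imsetP; exists x; rewrite ?inE.
  by have [t lt hy] := cvr' y; exists t.+1 => //; apply/imsetP; exists y.
- move=> [|t] [|t'] z /andP [l1 l2]; first by move: l1.
  + move=> /imsetP [a _ ->] /imsetP [b hb eab].
    have [ha _] := ov _ _ eab.
    have [d1 d2] := bd_dim aA ha.
    rewrite (dcl_dim ei di aW); split => // da w /imsetP [a' _ ->] c.
    rewrite (emb_cov ei) in c; rewrite (emb_sgn ei c).
    have := d2 da; rewrite /Delta inE => /andP [_ /andP [_ /forallP H]].
    by have := H a'; rewrite in_setT c /=; case: (ogsgn a a').
  + by move: l1.
  + move=> /imsetP [b1 hb1 ->] /imsetP [b2 hb2 eb].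
    have e12 := emb_inj ej eb; subst b2.
    have [d1 d2] := ovl' t t' b1 (introT andP (conj l1 l2)) hb1 hb2.
    rewrite (dcl_dim ej dj aW); split => // db w /imsetP [b' hb' ->] c.
    rewrite (emb_cov ej) in c; rewrite (emb_sgn ej c); exact: d2 db b' hb' c.
- move=> [|t] lt.
    have [a ha] := dimP_witness dA; exists (i a).
      by apply/imsetP; exists a; rewrite ?inE.
    by rewrite (dcl_dim ei di aW).
  have [a ha da] := ex' t lt; exists (j a).
    by apply/imsetP; exists a.
  by rewrite (dcl_dim ej dj aW).
Qed.

Theorem proposition3p11 (U : ogp) (k : int) :
  regular U -> (-1 <= k)%R ->
  (exists s : seq ogp, layering U k s) ->
  M_acyclic U k /\ exists s : seq U, k_ordering k s.
Proof.
move=> regU _ [s [_ _ sz fo ps]].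
have acU := regular_acyc regU.
case: k sz fo ps => [n|n] sz fo ps; last first.
  have noE : forall x y : U, ~~ Medge (Negz n) x y.
    by move=> x y; rewrite /Medge /Delta /= set0I eqxx !andbF.
  split; first by move=> x y; rewrite (negbTE (noE x y)).
  exists (enum (Mvert U (Negz n))); split.
  - exact: enum_uniq.
  - by move=> x; rewrite mem_enum.
  - by move=> x y; rewrite (negbTE (noE x y)).
have m0 : 0 < size s by move: ps; case: (s) => [[]|? ? _].
have [L [dc cvr ovl ex]] := decomp_ex acU ps fo.
have Ldc : forall t z w, le z w -> w \in L t -> z \in L t.
  move=> t; apply: (@connect_rect _ _ (fun z w => w \in L t -> z \in L t)) => //.
  by move=> x y z c h1 h2; apply: dc c (h1 h2).
have mv_dim : forall x, x \in Mvert U n -> n < dimx x.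
  by move=> x; rewrite /Mvert inE => /andP [_]; rewrite ltz_nat.
have uniqL : forall x t t', n < dimx x -> t < size s -> t' < size s ->
    x \in L t -> x \in L t' -> t = t'.
  move=> x t t' dx lt lt' h h'; case: (ltngtP t t') => [l|l|//].
    have [d _] := ovl t t' x (introT andP (conj l lt')) h h'.
    by move: d; rewrite leqNgt dx.
  have [d _] := ovl t' t x (introT andP (conj l lt)) h' h.
  by move: d; rewrite leqNgt dx.
have surjL : forall t, t < size s -> exists2 u, u \in Mvert U n & u \in L t.
  move=> t lt; have [a ha da] := ex t lt.
  have [u lau umax] : exists2 u, le a u & forall v, le a v -> dimx v <= dimx u.
    case: (@arg_maxnP U a (fun v => le a v) (@dimx U) (le_refl a)) => u h1 h2.
    by exists u.
  have du : n < dimx u := leq_trans da (dim_le acU lau).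
  have [t0 lt0 hu] := cvr u.
  have ha0 := Ldc _ _ _ lau hu.
  have e := uniqL a t t0 da lt lt0 ha ha0; subst t0.
  exists u => //.
  rewrite /Mvert inE ltz_nat du andbT /maxs inE in_setT /=.
  apply/forallP => y; apply/implyP => _; apply/implyP => l.
  apply/negPn/negP => ne.
  have := dim_lt acU l (ltac:(by rewrite eq_sym)).
  by rewrite ltnNge umax // (le_tr lau l).
have [x0 _ _] := ex 0 m0.
pose u t := odflt x0 [pick v in Mvert U n | v \in L t].
have hu : forall t, t < size s -> u t \in Mvert U n /\ u t \in L t.
  move=> t lt; rewrite /u; case: pickP => [v /andP [h1 h2] | none] //=.
  have [v hv1 hv2] := surjL t lt; by move: (none v); rewrite hv1 hv2.
pose S := mkseq u (size s).
have uS : uniq S.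
  rewrite /S /mkseq map_inj_in_uniq ?iota_uniq // => t1 t2.
  rewrite !mem_iota !add0n => /andP [_ l1] /andP [_ l2] e.
  have [a1 b1] := hu t1 l1; have [a2 b2] := hu t2 l2.
  rewrite e in a1 b1.
  exact: (uniqL (u t2) t1 t2 (mv_dim _ a2) l1 l2 b1 b2).
have Ssub : {subset S <= Mvert U n}.
  move=> x /mapP [t]; rewrite mem_iota add0n => /andP [_ lt] ->.
  by have [] := hu t lt.
have cS : #|S| = #|Mvert U n| by rewrite (card_uniqP uS) size_mkseq.
have memS : forall x, (x \in S) = (x \in Mvert U n).
  exact: (elimT (subset_cardP cS) (introT subsetP Ssub)).
have idx : forall x, x \in Mvert U n -> index x S < size s /\ x = u (index x S).
  move=> x hx; have xS : x \in S by rewrite memS.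
  have li : index x S < size s by rewrite -[X in _ < X](size_mkseq u (size s)) index_mem.
  split => //.
  by rewrite -{1}(nth_index x0 xS) /S nth_mkseq.
have inL : forall x, x \in Mvert U n -> x \in L (index x S).
  move=> x hx; have [l e] := idx x hx.
  by have [_] := hu _ l; rewrite -e.
have key : forall x y, Medge (Posz n) x y -> index x S < index y S.
  move=> x y; rewrite /Medge => /and3P [hx hy /set0Pn [z]].
  rewrite inE => /andP [zx zy].
  move: zx; rewrite /Delta inE => /andP [zclx /andP [/eqP dz /forallP Hx]].
  move: zy; rewrite /Delta inE => /andP [zcly /andP [_ /forallP Hy]].
  move: zclx; rewrite in_cl => /existsP [x' /andP [/set1P ex' lzx]]; subst x'.
  move: zcly; rewrite in_cl => /existsP [y' /andP [/set1P ey' lzy]]; subst y'.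
  have hzx := Ldc _ _ _ lzx (inL x hx).
  have hzy := Ldc _ _ _ lzy (inL y hy).
  have [ltx _] := idx x hx; have [lty _] := idx y hy.
  have incl : forall v w : U, le w v -> w \in cl [set v].
    by move=> v w l; rewrite in_cl; apply/existsP; exists v; rewrite set11 l.
  case: (ltngtP (index x S) (index y S)) => [//|lt|eq].
    have [_ d2] := ovl _ _ z (introT andP (conj lt ltx)) hzy hzx.
    have nezy : z != y.
      by apply/eqP => e; subst z; move: (mv_dim _ hy); rewrite dz ltnn.
    have [w c lwy] := first_step lzy nezy.
    have sg := d2 dz w (Ldc _ _ _ lwy (inL y hy)) c.
    by have := Hy w; rewrite incl // c sg.
  have exy : x = y by rewrite (idx x hx).2 (idx y hy).2 eq.
  subst y.
  have nezx : z != x.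
    by apply/eqP => e; subst z; move: (mv_dim _ hx); rewrite dz ltnn.
  have [w c lwx] := first_step lzx nezx.
  have := Hx w; have := Hy w; rewrite incl // c /=.
  by case: (ogsgn z w).
split.
  move=> x y e; apply/negP => cyx.
  have := @conn_mono U (Medge (Posz n)) (fun v => index v S)
    (fun a b h => ltnW (key a b h)) _ _ cyx.
  by rewrite leqNgt key.
exists S; split => //.
Qed.
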